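(* Let $H$ be a graph with vertex set $A\cup\{v\}$, where $v\notin A$, $A$ is a clique, and $v$ has both a neighbour and a non-neighbour in $A$. Let $F$ be a spanning subgraph of $H$ obtained by removing some (possibly all) edges incident to $v$. Then $H\xrightarrow{\cap} F$.
   Context: All graphs are finite and simple. For graphs $G_1=(V_1,E_1)$, $G_2=(V_2,E_2)$, $G_1\cap G_2=(V_1\cap V_2, E_1\cap E_2)$. For a graph $G=(V,E)$ and an injective map $\alpha$ on $V$, $G^{\alpha}$ has vertex set $\alpha(V)$ and edge set $\{\{\alpha(v),\alpha(w)\}: \{v,w\}\in E\}$. We write $G\xrightarrow{\cap} H$ if $H=G^{\alpha_1}\cap\cdots\cap G^{\alpha_k}$ for some $k\ge1$ and injective maps $\alpha_1,\dots,\alpha_k$ on $V(G)$. *)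

(* Defs.v *)
From mathcomp Require Import all_boot.
From Stdlib Require Lists.List.
Set Implicit Arguments. Unset Strict Implicit. Unset Printing Implicit Defensive.

Record graph (T : finType) := Graph { gV : {set T}; gE : {set {set T}} }.

Definition simple_graph (T : finType) (G : graph T) : Prop :=
  forall e, e \in gE G -> (e \subset gV G) /\ #|e| = 2.

Definition gcap (T : finType) (G1 G2 : graph T) : graph T :=
  Graph (gV G1 :&: gV G2) (gE G1 :&: gE G2).

Definition gimg (T : finType) (a : T -> T) (G : graph T) : graph T :=
  Graph (a @: gV G) [set a @: e | e : {set T} in gE G].

(* G -->∩ H : H = G^{a_1} ∩ ... ∩ G^{a_k}, k >= 1, each a_i injective on V(G).
   The maps are given as a0 :: s. *)
Definition cap_arrow (T : finType) (G H : graph T) : Prop :=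
  exists (a0 : T -> T) (s : seq (T -> T)),
    (forall a, Stdlib.Lists.List.In a (a0 :: s) -> {in gV G &, injective a}) /\
    H = foldr (fun a acc => gcap (gimg a G) acc) (gimg a0 G) s.

(* Main.v *)
Require Import Defs.
From mathcomp Require Import all_boot.
Set Implicit Arguments. Unset Strict Implicit.

Lemma inv_imset (aT : finType) (f : aT -> aT) (S : {set aT}) :
  involutive f -> forall y, (y \in f @: S) = (f y \in S).
Proof.
move=> fK y; apply/imsetP/idP => [[z zS ->]|fyS]; first by rewrite fK.
by exists (f y); rewrite ?fK.
Qed.

Lemma imset_invol (aT : finType) (f : aT -> aT) :
  involutive f -> involutive (fun e : {set aT} => f @: e).
Proof.
move=> fK e /=; rewrite -imset_comp (@eq_imset _ _ _ id) ?imset_id //.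

Qed.

Lemma gimgV (T : finType) (a : T -> T) G y : involutive a ->
  (y \in gV (gimg a G)) = (a y \in gV G).
Proof. by move=> aK; rewrite /= inv_imset. Qed.

Lemma gimgE (T : finType) (a : T -> T) G e : involutive a ->
  (e \in gE (gimg a G)) = (a @: e \in gE G).
Proof. by move=> aK; rewrite /= (inv_imset _ (imset_invol aK)). Qed.

Lemma fold_V (T : finType) (G : graph T) a0 s y :
  (y \in gV (foldr (fun a acc => gcap (gimg a G) acc) (gimg a0 G) s)) =
  (y \in gV (gimg a0 G)) && all (fun a => y \in gV (gimg a G)) s.
Proof.
elim: s => [|a s IH] /=; first by rewrite andbT.
by rewrite in_setI IH andbCA.
Qed.

Lemma fold_E (T : finType) (G : graph T) a0 s y :
  (y \in gE (foldr (fun a acc => gcap (gimg a G) acc) (gimg a0 G) s)) =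
  (y \in gE (gimg a0 G)) && all (fun a => y \in gE (gimg a G)) s.
Proof.
elim: s => [|a s IH] /=; first by rewrite andbT.
by rewrite in_setI IH andbCA.
Qed.

Definition sw (T : eqType) (m x : T) := fun y : T =>
  if y == x then m else if y == m then x else y.

Lemma swK (T : eqType) (m x : T) : involutive (sw m x).
Proof.
move=> y; rewrite /sw.
case: (y =P x) => [->|yx]; first by rewrite eqxx; case: (m =P x).
case: (y =P m) => [->|ym]; first by rewrite eqxx.
by do 2 (case: eqP => //).
Qed.

Lemma fix_imset (T : finType) (f : T -> T) (e : {set T}) :
  {in e, forall y, f y = y} -> f @: e = e.
Proof. by move=> H; rewrite (eq_in_imset H) imset_id. Qed.

Lemma graph_ext (T : finType) (G1 G2 : graph T) :
  gV G1 = gV G2 -> gE G1 = gE G2 -> G1 = G2.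
Proof. by case: G1 G2 => ? ? [? ?] /= -> ->. Qed.

Theorem mainTheorem10 (T : finType) (H F : graph T) (A : {set T}) (v : T) :
  simple_graph H ->
  v \notin A ->
  gV H = v |: A ->
  (forall x y, x \in A -> y \in A -> x != y -> [set x; y] \in gE H) ->
  (exists2 a, a \in A & [set v; a] \in gE H) ->
  (exists2 a, a \in A & [set v; a] \notin gE H) ->
  gV F = gV H ->
  gE F \subset gE H ->
  (forall e, e \in gE H -> e \notin gE F -> v \in e) ->
  cap_arrow H F.
Proof.
move=> sH vA VH cl _ [m mA vmH] VF EFH EHv.
pose R := [set x in A | [set v; x] \notin gE F].
have idK : involutive (@id T) by [].
exists id, (map (sw m) (enum R)); split.
  move=> a Ha; apply: (in2W (can_inj (_ : involutive a))).
  case: Ha => [<-|/List.in_map_iff [x [<- _]]] //; exact: swK.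
have vx x : x \in A -> v != x by move=> xA; apply/eqP => vx; rewrite vx xA in vA.
have swv x : x \in A -> sw m x v = v.
  by move=> xA; rewrite /sw (negbTE (vx _ xA)) (negbTE (vx _ mA)).
have swA x y : x \in A -> (sw m x y \in A) = (y \in A).
  move=> xA; rewrite /sw; case: (y =P x) => [->|_]; first by rewrite mA xA.
  by case: (y =P m) => [->|_]; rewrite ?mA ?xA.
have clE (f : {set T}) : f \subset A -> #|f| = 2 -> f \in gE H.
  move=> fA /eqP/cards2P [p [q [pq fpq]]]; rewrite fpq in fA *.
  by apply: cl => //; apply: (subsetP fA); rewrite !inE eqxx ?orbT.
have vedge e : e \in gE H -> v \in e -> exists2 q, q \in A & e = [set v; q].
  move=> eH ve; have [eV /eqP/cards2P [p [q [pq epq]]]] := sH e eH.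
  have qpV : p \in gV H /\ q \in gV H.
    by split; apply: (subsetP eV); rewrite epq !inE eqxx ?orbT.
  rewrite VH !inE in qpV; move: ve; rewrite epq !inE => /orP [/eqP vp|/eqP vq].
    exists q; last by rewrite vp.
    by case: qpV => _ /orP [/eqP qv|//]; move: pq; rewrite -vp qv eqxx.
  exists p; last by rewrite vq setUC.
  by case: qpV => /orP [/eqP pv|//] _; move: pq; rewrite -vq pv eqxx.
apply: graph_ext.
  apply/setP => y; rewrite fold_V gimgV // VF VH all_map.
  case yA: (y \in v |: A) => //=; apply/esym/allP => x /=.
  rewrite mem_enum inE => /andP [xA _]; rewrite gimgV ?VH; last exact: swK.
  move: yA; rewrite !inE => /orP [/eqP ->|yA]; first by rewrite swv ?eqxx.
  by rewrite swA ?yA ?orbT.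
apply/setP => e; rewrite fold_E gimgE // imset_id all_map.
apply/idP/idP.
  move=> eF; have eH := subsetP EFH _ eF; rewrite eH /=; apply/allP => x.
  rewrite mem_enum inE => /andP [xA xF] /=; rewrite gimgE; last exact: swK.
  have [eV e2] := sH e eH.
  case ve: (v \in e).
    have [q qA eq] := vedge e eH ve.
    rewrite fix_imset // => y; rewrite eq !inE => /orP [/eqP ->|/eqP ->].
      exact: swv.
    rewrite /sw; case: (q =P x) => [qx|_]; first by rewrite -qx -eq eF in xF.
    case: (q =P m) => [qm|//]; by rewrite -qm -eq eH in vmH.
  apply: clE; last by rewrite card_imset //; apply: (can_inj (swK m x)).
  apply/subsetP => _ /imsetP [y ye ->]; rewrite swA //.
  by have := subsetP eV y ye; rewrite VH !inE => /orP [/eqP vy|//]; rewrite vy ve in ye.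
move=> /andP [eH /allP Hs]; apply/negPn/negP => eF.
have [q qA eq] := vedge e eH (EHv e eH eF).
have qR : q \in enum R by rewrite mem_enum inE qA -eq eF.
have := Hs q qR; rewrite /= gimgE; last exact: swK.
rewrite eq imsetU1 imset_set1 swv // /sw eqxx.
by rewrite (negbTE vmH).
Qed.
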